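(* Let $n$ be a positive integer, $g=3n+1$, and let $G=\{\ell_1<\dots<\ell_g\}$ be a pure $(2n)$-sparse gapset of genus $g$ with multiplicity $m$ and depth $q\le 3$. Let $\alpha=\max\{i:\ell_{i+1}-\ell_i=2n\}$. Then $\ell_\alpha\le 2m-1$.
   Context: A gapset is a finite set $G\subset\mathbb{N}=\{1,2,\dots\}$ such that whenever $z\in G$ and $z=x+y$ with $x,y\in\mathbb{N}$, then $x\in G$ or $y\in G$; its genus is $g=\#G$. Multiplicity $m(G)=\min\{s\in\mathbb{N}:s\notin G\}$; conductor $c(G)=\min\{s\in\mathbb{N}: s+t\notin G\ \forall t\in\mathbb{N}_0\}$; depth $q(G)=\lceil c(G)/m(G)\rceil$. $G$ is pure $\kappa$-sparse if $\ell_{i+1}-\ell_i\le\kappa$ for all $i$ with equality for some $i$. *)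

(* Defs.v *)
From mathcomp Require Import all_boot.
Set Implicit Arguments. Unset Strict Implicit. Unset Printing Implicit Defensive.

(* A finite set G of positive integers is represented by the strictly
   increasing list of its elements [:: l_1; ...; l_g]. *)
Definition gapset (G : seq nat) : Prop :=
  sorted ltn G /\ (forall z, z \in G -> 0 < z) /\
  (forall z x y, z \in G -> 0 < x -> 0 < y -> z = x + y -> (x \in G) \/ (y \in G)).

Definition genus (G : seq nat) : nat := size G.

(* 1-based indexing: ell G i = l_i *)
Definition ell (G : seq nat) (i : nat) : nat := nth 0 G i.-1.

Definition is_least (P : nat -> Prop) (n : nat) : Prop :=
  P n /\ forall k, P k -> n <= k.

Definition is_greatest (P : nat -> Prop) (n : nat) : Prop :=
  P n /\ forall k, P k -> k <= n.

Definition is_multiplicity (G : seq nat) (m : nat) : Prop :=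
  is_least (fun s => 0 < s /\ s \notin G) m.

Definition is_conductor (G : seq nat) (c : nat) : Prop :=
  is_least (fun s => 0 < s /\ forall t, s + t \notin G) c.

Definition ceil_div (c m : nat) : nat := (c + m.-1) %/ m.

Definition is_depth (G : seq nat) (q : nat) : Prop :=
  exists m c, is_multiplicity G m /\ is_conductor G c /\ q = ceil_div c m.

Definition pure_sparse (kappa : nat) (G : seq nat) : Prop :=
  (forall i, 1 <= i < size G -> ell G i.+1 - ell G i <= kappa) /\
  (exists i, 1 <= i < size G /\ ell G i.+1 - ell G i = kappa).

(* Main.v *)
Require Import Defs.
From mathcomp Require Import all_boot.
From mathcomp Require Import zify.

Lemma half_bounds y : y./2 + y./2 <= y /\ y <= y./2 + y./2 + 1.
Proof.
rewrite addnn; have := odd_double_half y; case: (odd y) => /= <-; lia.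
Qed.

Lemma key (G : seq nat) y : gapset G -> y \in G -> y./2 + 1 <= size G.
Proof.
case=> _ [pos H] yG.
have y0 := pos y yG.
have [hb1 hb2] := half_bounds y.
pose f := fun a => if a \in G then a else y - a.
have fG : forall a, 0 < a <= y./2 -> f a \in G.
  move=> a /andP[a0 ay]; rewrite /f; case: ifP => // aG.
  have : 0 < y - a by lia.
  move=> ya; case: (H y a (y - a) yG a0 ya) => //; [lia | by rewrite aG].
have fy : forall a, 0 < a <= y./2 -> f a < y.
  move=> a /andP[a0 ay]; rewrite /f; case: ifP => _; lia.
have finj : {in iota 1 y./2 &, injective f}.
  move=> a b; rewrite !mem_iota => /andP[a1 a2] /andP[b1 b2].
  rewrite /f; case: ifP => _; case: ifP => _; lia.
have : size (rcons (map f (iota 1 y./2)) y) <= size G.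
  apply: uniq_leq_size.
  - rewrite rcons_uniq (map_inj_in_uniq finj) iota_uniq andbT.
    apply/mapP => -[a]; rewrite mem_iota => /andP[a1 a2] ya.
    have := fy a; rewrite a1 /=; lia.
  - move=> z; rewrite mem_rcons in_cons => /orP[/eqP -> //|/mapP[a]].
    rewrite mem_iota => /andP[a1 a2] ->; apply: fG; lia.
by rewrite size_rcons size_map size_iota addn1.
Qed.

Theorem mainTheorem16 (n : nat) (G : seq nat) (m q alpha : nat) :
  0 < n ->
  gapset G ->
  genus G = 3 * n + 1 ->
  pure_sparse (2 * n) G ->
  is_multiplicity G m ->
  is_depth G q ->
  q <= 3 ->
  is_greatest (fun i => 1 <= i < size G /\ ell G i.+1 - ell G i = 2 * n) alpha ->
  ell G alpha <= 2 * m - 1.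
Proof.
move=> n0 gG hg _ [[m0 mG] mmin0] [m' [c [[[m0' mG'] mmin] [[[c0 hc] _] hqd]]]] hq.
move=> [[/andP[a1 a2] heq] _].
have mm : m' = m.
  by apply/eqP; rewrite eqn_leq (mmin _ (conj m0 mG)) (mmin0 _ (conj m0' mG')).
subst m'.
move: heq; rewrite /ell /=.
set x := nth 0 G alpha.-1; set y := nth 0 G alpha => heq.
have yG : y \in G by apply: mem_nth.
have yc : y < c.
  rewrite ltnNge; apply/negP => cy.
  by have := hc (y - c); rewrite subnKC // yG.
have hc3 : c + m.-1 < 4 * m.
  by rewrite -ltn_divLR //; move: hq; rewrite hqd /ceil_div; lia.
have := key _ _ gG yG; have := half_bounds y; rewrite /genus in hg; lia.
Qed.
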